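(* Let $F$ (of size $N$) and $G$ (of size $M$) be Fourier matrices. (a) If $\gcd(M,N)=1$, then the number of entries of $F\otimes G$ equal to $1$ is the product of the number of entries of $F$ equal to $1$ and the number of entries of $G$ equal to $1$ (equivalently, the multiplicity of $1$ in the spectrum of $\mathcal I_{(MN)^{-1/2}F\otimes G}$ is the product of those for $\mathcal I_{N^{-1/2}F}$ and $\mathcal I_{M^{-1/2}G}$); that is, $\mathbf D(F\otimes G)=\mathbf D(F)\cdot\mathbf D(G)$. (b) If $\gcd(M,N)>1$, then $\mathbf D(F\otimes G)>\mathbf D(F)\cdot\mathbf D(G)$.
   Context: For $n\ge1$, $F_n$ is the $n\times n$ matrix with entries $e^{2\pi i\,jk/n}$, $j,k\in\{0,\dots,n-1\}$; a Fourier matrix is a Kronecker product $F_{N_1}\otimes\cdots\otimes F_{N_r}$. For a unitary $W$ with no zero entries, $\mathcal I_W=\mathcal C_W^{-1}\mathcal D_W$ where $\mathcal C_W(X)=(X\circ W)W^*$, $\mathcal D_W(X)=W(\overline X\circ W)^*$ ($\circ$ entrywise product). For a rescaled unitary $V$ with no zero entries, $\mathbf D(V)=\dim_{\mathbb R}\{iR\circ V:\ R\text{ real},\ (iR\circ V)V^*\text{ antihermitian}\}$; for a Fourier matrix this equals the number of its entries equal to $1$. *)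

(* Defs.v *)
From HB Require Import structures.
From mathcomp Require Import all_boot all_order all_algebra.
From mathcomp Require Import complex mxtens.
From mathcomp Require Import reals trigo.
Set Implicit Arguments. Unset Strict Implicit. Unset Printing Implicit Defensive.
Import Order.TTheory GRing.Theory Num.Theory.
Local Open Scope ring_scope.
Local Open Scope complex_scope.

Section Fourier.
Variable R : realType.
Local Notation C := R[i].

Definition cexp (x : R) : C := cos x +i* sin x.

Definition Fmat (n : nat) : 'M[C]_n :=
  \matrix_(j < n, k < n) cexp (2 * pi * (j * k)%:R / n%:R).

(* Fourier matrix F_{N_1} (x) ... (x) F_{N_r} of size N_1 * ... * N_r
   (Kronecker product: mxtens's A *t B, row index i*p + k). *)
Fixpoint fourier (ns : seq nat) : 'M[C]_(foldr muln 1%N ns) :=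
  match ns return 'M[C]_(foldr muln 1%N ns) with
  | [::] => 1%:M
  | n :: ns' => Fmat n *t fourier ns'
  end.

Definition adjmx n (A : 'M[C]_n) : 'M[C]_n := (map_mx conjc A)^T.

Definition hadamard n (A B : 'M[C]_n) : 'M[C]_n := \matrix_(i, j) (A i j * B i j).

(* For a real matrix Rm, the defect X + X^* of X = (i Rm o V) V^* from being
   antihermitian, encoded by its real and imaginary parts. *)
Definition antiherm_defect n (V : 'M[C]_n) (Rm : 'M[R]_n) : 'M[R]_n * 'M[R]_n :=
  let X := hadamard (map_mx (fun r => 0 +i* r) Rm) V *m adjmx V in
  let H := X + adjmx X in
  (map_mx (@complex.Re R) H, map_mx (@complex.Im R) H).

(* D(V) = dim_R { i R o V : R real, (i R o V) V^* antihermitian }.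
   Since R |-> i R o V is R-linear and injective when V has no zero entries,
   this is the dimension of the real space of such real matrices R, i.e. the
   kernel of the (R-linear) map antiherm_defect V. *)
Definition Ddim n (V : 'M[C]_n) : nat := \dim (lker (linfun (antiherm_defect V))).

End Fourier.

(* Main.v *)
Require Import Defs.
From HB Require Import structures.
From mathcomp Require Import all_boot all_order all_algebra.
From mathcomp Require Import complex mxtens.
From mathcomp Require Import reals trigo.
From mathcomp Require Import ring lra.
Set Implicit Arguments. Unset Strict Implicit. Unset Printing Implicit Defensive.
Import Order.TTheory GRing.Theory Num.Theory.
Local Open Scope ring_scope.
Local Open Scope complex_scope.

Section Cexp.
Variable R : realType.
Local Notation C := R[i].

Lemma cexpD (x y : R) : cexp (x + y) = cexp x * cexp y.
Proof.
rewrite /cexp cosD sinD /=. apply/eqP; rewrite eq_complex /=.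
apply/andP; split; apply/eqP; ring.
Qed.

Lemma cexp_conj (x : R) : cexp x * (cexp x)^* = 1.
Proof.
rewrite /cexp /=. apply/eqP; rewrite eq_complex /=.
apply/andP; split; apply/eqP.
  by rewrite -(cos2Dsin2 x); ring.
ring.
Qed.

Lemma cexp0 : cexp 0 = 1 :> C.
Proof. by rewrite /cexp cos0 sin0. Qed.

Lemma cexp_2pi (m : nat) : cexp (2 * pi * m%:R : R) = 1.
Proof.
have -> : 2 * pi * m%:R = 0 + (pi *+ 2) *+ m :> R.
  rewrite add0r -mulrnA -[pi *+ _]mulr_natl natrM; ring.
by rewrite /cexp (periodicn (@cosD2pi R)) (periodicn (@sinD2pi R)) cos0 sin0.
Qed.

Lemma cexpX (x : R) (k : nat) : cexp (x * k%:R) = cexp x ^+ k.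
Proof.
elim: k => [|k IH]; first by rewrite mulr0 cexp0 expr0.
by rewrite -addn1 natrD mulrDr mulr1 cexpD IH exprD expr1.
Qed.

Lemma cexp_neq1 (x : R) : 0 < x < pi *+ 2 -> cexp x != 1.
Proof.
move=> /andP[x0 x2]; rewrite /cexp eq_complex /= negb_and; apply/orP; left.
have I0 : (0:R) \in `[0, pi] by rewrite in_itv /= lexx pi_ge0.
have [xpi|pix] := lerP x pi.
  have : cos x < cos 0.
    rewrite ltr_cos //; by rewrite in_itv /= (ltW x0) xpi.
  by rewrite cos0 => /lt_eqF ->.
have : cos (pi *+ 2 - x) < cos 0.
  rewrite ltr_cos //; first by rewrite subr_gt0.
  rewrite in_itv /= subr_ge0 (ltW x2) /=.
  by rewrite lerBlDl mulr2n lerD2r ltW.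
by rewrite cos0 cosB cos2pi sin2pi mul0r addr0 mul1r => /lt_eqF ->.
Qed.

End Cexp.

Definition charmx (R : realType) n (W : 'M[R[i]]_n) : Prop :=
  [/\ forall i j, W i j = W j i,
      forall i j, W i j * (W i j)^* = 1,
      exists s : 'I_n -> 'I_n -> 'I_n, forall a b c, W (s a b) c = W a c * W b c,
      exists t : 'I_n -> 'I_n, forall a c, W (t a) c = (W a c)^* &
      forall a b, \sum_c W a c * (W b c)^* = (a == b)%:R * n%:R ].

Section Geo.
Variable F : fieldType.
Lemma geo0 (z : F) n : z ^+ n = 1 -> z != 1 -> \sum_(k < n) z ^+ k = 0.
Proof.
move=> zn z1.
have : \sum_(k < n.+1) z ^+ k = \sum_(k < n.+1) z ^+ k by [].
rewrite {1}big_ord_recr big_ord_recl /= zn expr0 => E.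
have E2 : \sum_(i < n) z ^+ (bump 0 i) = z * \sum_(k < n) z ^+ k.
  rewrite mulr_sumr; apply: eq_bigr => i _; by rewrite /bump /= add1n exprS.
rewrite E2 addrC in E.
have : (1 - z) * \sum_(k < n) z ^+ k == 0.
  by rewrite mulrBl mul1r subr_eq0 {1}(addrI _ E).
by rewrite mulf_eq0 subr_eq0 eq_sym (negPf z1) /= => /eqP.
Qed.
End Geo.

Section FmatProps.
Variable R : realType.
Variable n : nat.
Hypothesis n0 : (0 < n)%N.
Local Notation C := R[i].

Definition ee (m : nat) : C := cexp (2 * pi * m%:R / n%:R).

Lemma FmatE j k : Fmat R n j k = ee (j * k)%N.
Proof. by rewrite mxE. Qed.

Lemma eeD a b : ee (a + b)%N = ee a * ee b.
Proof. by rewrite /ee -cexpD natrD !mulrDr mulrDl. Qed.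

Lemma ee_muln k : ee (k * n)%N = 1.
Proof.
rewrite /ee natrM mulrA mulfK ?cexp_2pi //.
by rewrite pnatr_eq0 -lt0n.
Qed.

Lemma ee_mod m : ee m = ee (m %% n).
Proof. by rewrite {1}(divn_eq m n) eeD ee_muln mul1r. Qed.

Lemma ee_conj m : ee m * (ee m)^* = 1.
Proof. exact: cexp_conj. Qed.

Lemma eeX d c : ee (d * c)%N = ee d ^+ c.
Proof.
rewrite /ee -cexpX; congr cexp; rewrite natrM; field.
by rewrite pnatr_eq0 -lt0n.
Qed.

Lemma ee_neq1 d : (0 < d < n)%N -> ee d != 1.
Proof.
move=> /andP[d0 dn]; apply: cexp_neq1; have pi0 := pi_gt0 R.
have hd : (d%:R : R) < n%:R by rewrite ltr_nat.
have hd0 : (0 : R) < d%:R by rewrite ltr0n.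
have hn0 : (0 : R) < n%:R by rewrite ltr0n.
apply/andP; split.
  by rewrite divr_gt0 // mulr_gt0 //; lra.
rewrite ltr_pdivrMr // mulr2n; nra.
Qed.

Lemma ee0 : ee 0 = 1.
Proof. by rewrite /ee mulr0 mul0r cexp0. Qed.

Lemma conj_inv (x y : C) : x * y = 1 -> y * y^* = 1 -> x = y^*.
Proof. by move=> xy yy; rewrite -[x]mulr1 -yy mulrA xy mul1r. Qed.

Lemma Fmat_orth_lt (a b : 'I_n) : (b < a)%N ->
  \sum_c Fmat R n a c * (Fmat R n b c)^* = 0.
Proof.
move=> ba.
have E : forall c : 'I_n, Fmat R n a c * (Fmat R n b c)^* = ee (a - b) ^+ c.
  move=> c; rewrite !FmatE -eeX.
  have -> : (a * c = (a - b) * c + b * c)%N by rewrite -mulnDl subnK // ltnW.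
  by rewrite eeD -mulrA ee_conj mulr1.
under eq_bigr do rewrite E.
apply: geo0; first by rewrite -eeX ee_muln.
apply: ee_neq1; rewrite subn_gt0 ba /=.
exact: leq_ltn_trans (leq_subr _ _) (ltn_ord a).
Qed.

Lemma Fmat_charmx : charmx (Fmat R n).
Proof.
split.
- by move=> i j; rewrite !FmatE mulnC.
- by move=> i j; rewrite FmatE ee_conj.
- exists (fun a b => Ordinal (ltn_pmod (a + b) n0)) => a b c.
  by rewrite !FmatE /= -eeD -mulnDl ee_mod [in RHS]ee_mod modnMml.
- exists (fun a => Ordinal (ltn_pmod (n - a) n0)) => a c.
  apply: conj_inv; last by rewrite FmatE ee_conj.
  rewrite !FmatE /= -eeD -mulnDl ee_mod -modnMml modnDml subnK ?modnn ?mul0n ?mod0n ?ee0 //.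
  exact: ltnW.
- move=> a b; case: (eqVneq a b) => [-> | ab].
    rewrite mul1r; under eq_bigr do rewrite FmatE ee_conj.
    by rewrite sumr_const card_ord.
  rewrite mul0r; case: (ltngtP a b) => [lab|lba|eab].
  + rewrite -[LHS]conjcK rmorph_sum /=.
    under eq_bigr do rewrite rmorphM /= conjcK mulrC.
    by rewrite Fmat_orth_lt // conjc0.
  + exact: Fmat_orth_lt.
  + by move: ab; rewrite (val_inj eab) eqxx.
Qed.

End FmatProps.

Lemma sum_tens (V : nmodType) m p (F : 'I_(m * p) -> V) :
  \sum_k F k = \sum_(i < m) \sum_(j < p) F (mxtens_index (i, j)).
Proof.
rewrite pair_big /= (reindex (@mxtens_index m p)) /=; last first.
  by exists (@mxtens_unindex m p) => x _; [rewrite mxtens_indexK | rewrite mxtens_unindexK].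
by apply: eq_bigr => [[i j]].
Qed.

Lemma mxtens_index_eq m p (i i' : 'I_m) (j j' : 'I_p) :
  (mxtens_index (i, j) == mxtens_index (i', j')) = (i == i') && (j == j').
Proof. by rewrite (inj_eq (can_inj (@mxtens_indexK m p))) xpair_eqE. Qed.

Section Tens.
Variable R : realType.
Local Notation C := R[i].

Lemma charmx_tens m p (A : 'M[C]_m) (B : 'M[C]_p) :
  charmx A -> charmx B -> charmx (A *t B).
Proof.
case=> symA uA [sA HsA] [tA HtA] oA; case=> symB uB [sB HsB] [tB HtB] oB.
split.
- move=> i j; case: (mxtens_indexP i) => i1 i2; case: (mxtens_indexP j) => j1 j2.
  by rewrite !tensmxE symA symB.
- move=> i j; case: (mxtens_indexP i) => i1 i2; case: (mxtens_indexP j) => j1 j2.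
  by rewrite !tensmxE rmorphM /= mulrACA uA uB mulr1.
- exists (fun x y => mxtens_index (sA (@mxtens_unindex m p x).1 (@mxtens_unindex m p y).1,
                                  sB (@mxtens_unindex m p x).2 (@mxtens_unindex m p y).2)).
  move=> a b c; case: (mxtens_indexP a) => a1 a2; case: (mxtens_indexP b) => b1 b2.
  case: (mxtens_indexP c) => c1 c2.
  by rewrite !mxtens_indexK /= !tensmxE HsA HsB mulrACA.
- exists (fun x => mxtens_index (tA (@mxtens_unindex m p x).1, tB (@mxtens_unindex m p x).2)).
  move=> a c; case: (mxtens_indexP a) => a1 a2; case: (mxtens_indexP c) => c1 c2.
  by rewrite !mxtens_indexK /= !tensmxE HtA HtB rmorphM.
- move=> a b; case: (mxtens_indexP a) => a1 a2; case: (mxtens_indexP b) => b1 b2.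
  rewrite sum_tens.
  have E : forall i j, (A *t B) (mxtens_index (a1, a2)) (mxtens_index (i, j)) *
        ((A *t B) (mxtens_index (b1, b2)) (mxtens_index (i, j)))^* =
        (A a1 i * (A b1 i)^*) * (B a2 j * (B b2 j)^*).
    by move=> i j; rewrite !tensmxE rmorphM /= mulrACA.
  transitivity (\sum_(i < m) \sum_(j < p) (A a1 i * (A b1 i)^*) * (B a2 j * (B b2 j)^*)).
    by apply: eq_bigr => i _; apply: eq_bigr => j _; exact: E.
  under eq_bigr do [rewrite -mulr_sumr].
  rewrite -mulr_suml oA oB mxtens_index_eq natrM.
  by case: eqP; case: eqP => _ _ /=; rewrite ?(mul0r, mulr0, mul1r, mulr1) // mulrA.
Qed.

Lemma charmx_one : charmx (1%:M : 'M[C]_1).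
Proof.
have E : forall i j : 'I_1, (1%:M : 'M[C]_1) i j = 1.
  by move=> x y; rewrite [x]ord1 [y]ord1 mxE.
split.
- by move=> i j; rewrite !E.
- by move=> i j; rewrite E rmorph1 mulr1.
- by exists (fun _ _ => ord0) => a b c; rewrite !E mulr1.
- by exists id => a c; rewrite !E rmorph1.
- move=> a b; rewrite big_ord1 !E rmorph1 mulr1 [a]ord1 [b]ord1 eqxx.
  by rewrite mul1r.
Qed.

Lemma fourier_charmx ns : all (fun n => 0 < n)%N ns -> charmx (fourier R ns).
Proof.
elim: ns => [_|n ns IH] /=; first exact: charmx_one.
move=> /andP[n0 /IH H]; apply: charmx_tens => //; exact: Fmat_charmx.
Qed.

End Tens.

Lemma lfunE_lin (K : fieldType) (aT rT : vectType K) (f : aT -> rT) :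
  linear f -> linfun f =1 f.
Proof.
move=> lf; pose fL : {linear aT -> rT} := HB.pack f (GRing.isLinear.Build _ _ _ _ f lf).
exact: (lfunE fL).
Qed.

Section CplxLemmas.
Variable R : realType.
Local Notation C := R[i].

Lemma ReMD (a : R) (z w : C) : complex.Re (a%:C * z + w) = a * complex.Re z + complex.Re w.
Proof. case: z => x y; case: w => u v /=; ring. Qed.

Lemma ImMD (a : R) (z w : C) : complex.Im (a%:C * z + w) = a * complex.Im z + complex.Im w.
Proof. case: z => x y; case: w => u v /=; ring. Qed.

Lemma iE (r : R) : (0 +i* r) = 'i * r%:C.
Proof. apply/eqP; rewrite eq_complex /=; apply/andP; split; apply/eqP; ring. Qed.

Lemma conj_iE (r : R) : (0 +i* r)^* = - ('i * r%:C).
Proof. apply/eqP; rewrite eq_complex /=; apply/andP; split; apply/eqP; ring. Qed.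

Lemma ReIm_eq0 (z : C) : complex.Re z = 0 -> complex.Im z = 0 -> z = 0.
Proof. by case: z => x y /= -> ->. Qed.

Lemma z_eq0 (z : C) : complex.Re z + complex.Im z = 0 ->
  complex.Re (conjc z) + complex.Im (conjc z) = 0 -> z = 0.
Proof.
case: z => x y /= h1 h2.
have hx : x = 0 by lra.
have hy : y = 0 by lra.
by rewrite hx hy.
Qed.

Lemma real_inj (x y : R) : x%:C = y%:C -> x = y.
Proof. by case. Qed.

Lemma conjcM (x y : C) : conjc (x * y) = conjc x * conjc y.
Proof. exact: rmorphM. Qed.
Lemma conjcB (x y : C) : conjc (x - y) = conjc x - conjc y.
Proof. exact: rmorphB. Qed.
Lemma conjcD (x y : C) : conjc (x + y) = conjc x + conjc y.
Proof. exact: rmorphD. Qed.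
Lemma conjc_sum (I : finType) (F : I -> C) : conjc (\sum_i F i) = \sum_i conjc (F i).
Proof. exact: rmorph_sum. Qed.
Lemma conjc_one : conjc (1 : C) = 1.
Proof. exact: rmorph1. Qed.
Lemma conjc_zero : conjc (0 : C) = 0.
Proof. exact: rmorph0. Qed.

End CplxLemmas.

Section Main.
Variable R : realType.
Local Notation C := R[i].
Variables (n : nat) (W : 'M[C]_n) (s : 'I_n -> 'I_n -> 'I_n) (t : 'I_n -> 'I_n).
Hypothesis n0 : (0 < n)%N.
Hypothesis Wsym : forall i j, W i j = W j i.
Hypothesis Wu : forall i j, W i j * (conjc (W i j)) = 1.
Hypothesis Ws : forall a b c, W (s a b) c = W a c * W b c.
Hypothesis Wt : forall a c, W (t a) c = (conjc (W a c)).
Hypothesis Wo : forall a b, \sum_c W a c * (conjc (W b c)) = (a == b)%:R * n%:R.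

Lemma nC_neq0 : (n%:R : C) != 0.
Proof. by rewrite pnatr_eq0 -lt0n. Qed.

Lemma row_inj x y : (forall c, W x c = W y c) -> x = y.
Proof.
move=> H; apply/eqP; have := Wo x y.
under eq_bigr do rewrite -H Wu.
rewrite sumr_const card_ord; case: eqP => // _; rewrite mul0r => /eqP.
by rewrite (negPf nC_neq0).
Qed.

Lemma sK b v : s (s b v) (t v) = b.
Proof. by apply: row_inj => c; rewrite !Ws Wt -mulrA Wu mulr1. Qed.

Lemma sK2 a b : s b (s a (t b)) = a.
Proof. by apply: row_inj => c; rewrite !Ws Wt mulrCA Wu mulr1. Qed.

Lemma s_inj v : injective (fun b => s b v).
Proof. by move=> x y /= h; rewrite -(sK x v) h sK. Qed.

Definition Rc (Rm : 'M[R]_n) : 'M[C]_n := map_mx (fun r => r%:C) Rm.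
Definition Tm (Rm : 'M[R]_n) : 'M[C]_n := W *m Rc Rm *m W.
Definition Dm (Rm : 'M[R]_n) a b :=
  \sum_c (Rm a c - Rm b c)%:C * (W a c * (conjc (W b c))).

Lemma TmE Rm e v : Tm Rm e v = \sum_a \sum_c W e a * (Rm a c)%:C * W c v.
Proof.
rewrite /Tm mxE; under eq_bigr do rewrite mxE mulr_suml.
rewrite exchange_big; apply: eq_bigr => a _; apply: eq_bigr => c _.
by rewrite mxE.
Qed.

Lemma I2 Rm e v : ((conjc (W e v)) - 1) * Tm Rm e v = \sum_b W e b * Dm Rm (s b v) b.
Proof.
have E1 : forall b, W e b * Dm Rm (s b v) b =
    \sum_c W e b * (Rm (s b v) c)%:C * W c v - \sum_c W e b * (Rm b c)%:C * W c v.
  move=> b; rewrite /Dm mulr_sumr -sumrB; apply: eq_bigr => c _.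
  have -> : W (s b v) c * (conjc (W b c)) = W c v by rewrite Ws mulrAC Wu mul1r Wsym.
  rewrite rmorphB /=; ring.
rewrite (eq_bigr _ (fun b _ => E1 b)) sumrB -TmE.
rewrite mulrBl mul1r; congr (_ - _); symmetry.
pose G a := \sum_c W e (s a (t v)) * (Rm a c)%:C * W c v.
transitivity (\sum_b G (s b v)).
  by apply: eq_bigr => b _; rewrite /G sK.
have -> : \sum_b G (s b v) = \sum_a G a by rewrite [RHS](reindex_inj (@s_inj v)).
rewrite TmE mulr_sumr; apply: eq_bigr => a _.
rewrite /G mulr_sumr; apply: eq_bigr => c _.
rewrite (Wsym e) Ws Wt (Wsym v e) (Wsym a e); ring.
Qed.

Lemma I3 Rm b' v : \sum_e (conjc (W b' e)) * (((conjc (W e v)) - 1) * Tm Rm e v)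
   = n%:R * Dm Rm (s b' v) b'.
Proof.
under eq_bigr do rewrite I2 mulr_sumr.
rewrite exchange_big /=.
have E : forall b, \sum_e (conjc (W b' e)) * (W e b * Dm Rm (s b v) b)
    = ((b == b')%:R * n%:R) * Dm Rm (s b v) b.
  move=> b; rewrite -Wo mulr_suml; apply: eq_bigr => e _.
  by rewrite (Wsym e b); ring.
under eq_bigr do rewrite E.
rewrite (bigD1 b') //= eqxx mul1r big1 ?addr0 // => b /negPf ->.
by rewrite !mul0r.
Qed.

Lemma L_DT Rm : (forall a b, Dm Rm a b = 0) <-> (forall e v, W e v != 1 -> Tm Rm e v = 0).
Proof.
split => H.
  move=> e v Wev; have := I2 Rm e v; rewrite big1 => [|b _]; last by rewrite H mulr0.
  move/eqP; rewrite mulf_eq0 => /orP[|/eqP //]; rewrite subr_eq0 => /eqP h.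
  by move: Wev; rewrite -[W e v]conjcK h conjc_one eqxx.
move=> a b; rewrite -{1}(sK2 a b).
have := I3 Rm b (s a (t b)); rewrite big1 => [|e _].
  by move/esym/eqP; rewrite mulf_eq0 (negPf nC_neq0) /= => /eqP.
case: (eqVneq (W e (s a (t b))) 1) => [->|ne].
  by rewrite rmorph1 subrr !mul0r mulr0.
by rewrite H // !mulr0.
Qed.


Lemma conj_real (r : R) : (conjc (r%:C)) = r%:C :> C.
Proof. exact: conjc_real. Qed.

Lemma conj_i : (conjc ('i : C)) = - 'i.
Proof. by apply/eqP; rewrite eq_complex /= oppr0 !eqxx. Qed.

Lemma conjT Rm e v : (conjc (Tm Rm e v)) = Tm Rm (t e) (t v).
Proof.
rewrite !TmE conjc_sum; apply: eq_bigr => a _; rewrite conjc_sum.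
apply: eq_bigr => c _.
by rewrite !conjcM conj_real Wt (Wsym c (t v)) Wt (Wsym v c).
Qed.

Lemma Wtt e v : W (t e) (t v) = W e v.
Proof. by rewrite Wt Wsym Wt conjcK Wsym. Qed.

Definition gH (Rm : 'M[R]_n) : 'M[R]_n :=
  \matrix_(e, v) (complex.Re (Tm Rm e v) + complex.Im (Tm Rm e v)).

Lemma Rc_lin (a : R) x y : Rc (a *: x + y) = a%:C *: Rc x + Rc y.
Proof. by apply/matrixP => i j; rewrite !mxE rmorphD rmorphM. Qed.

Lemma Tm_lin (a : R) x y : Tm (a *: x + y) = a%:C *: Tm x + Tm y.
Proof. by rewrite /Tm Rc_lin mulmxDr mulmxDl -scalemxAr -scalemxAl. Qed.

Lemma gH_lin : linear gH.
Proof.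
move=> a x y; rewrite /gH Tm_lin; apply/matrixP => i j; rewrite !mxE.
rewrite ReMD ImMD; ring.
Qed.

Lemma L_Tg Rm : (forall e v, W e v != 1 -> Tm Rm e v = 0) <->
                (forall e v, W e v != 1 -> gH Rm e v = 0).
Proof.
split => H e v Wev.
  rewrite mxE (H e v Wev); exact: addr0.
apply: z_eq0; first by have := H e v Wev; rewrite mxE.
rewrite conjT; have := H (t e) (t v); rewrite Wtt mxE; exact.
Qed.

Lemma WcW : map_mx conjc W *m W = n%:R%:M.
Proof.
apply/matrixP => i j; rewrite !mxE.
under eq_bigr do rewrite mxE (Wsym _ j) mulrC.
by rewrite Wo mulr_natl eq_sym.
Qed.

Lemma WWc : W *m map_mx conjc W = n%:R%:M.
Proof.
apply/matrixP => i j; rewrite !mxE.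
under eq_bigr do rewrite mxE (Wsym _ j).
by rewrite Wo mulr_natl.
Qed.

Lemma g_inj Rm : gH Rm = 0 -> Rm = 0.
Proof.
move=> H.
have HT : Tm Rm = 0.
  apply/matrixP => e v; rewrite [RHS]mxE; apply: z_eq0.
    by have := congr1 (fun M : 'M[R]_n => M e v) H; rewrite [LHS]mxE [RHS]mxE.
  rewrite conjT; have := congr1 (fun M : 'M[R]_n => M (t e) (t v)) H.
  by rewrite [LHS]mxE [RHS]mxE.
have : map_mx conjc W *m Tm Rm *m map_mx conjc W = (n%:R * n%:R) *: Rc Rm.
  rewrite /Tm !mulmxA WcW -mulmxA WWc mul_scalar_mx mul_mx_scalar scalerA.
  by [].
rewrite HT mulmx0 mul0mx => /esym /eqP; rewrite scaler_eq0 mulf_eq0 (negPf nC_neq0) /=.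
move/eqP/matrixP => HR; apply/matrixP => i j; have := HR i j; rewrite !mxE.
exact: real_inj.
Qed.

Lemma HE Rm a b :
  (hadamard (map_mx (fun r => 0 +i* r) Rm) W *m adjmx W +
   adjmx (hadamard (map_mx (fun r => 0 +i* r) Rm) W *m adjmx W)) a b = 'i * Dm Rm a b.
Proof.
have XE : forall a b, (hadamard (map_mx (fun r => 0 +i* r) Rm) W *m adjmx W) a b
    = \sum_c 'i * (Rm a c)%:C * (W a c * (conjc (W b c))).
  move=> a' b'; rewrite mxE; apply: eq_bigr => c _.
  by rewrite !mxE iE mulrA.
rewrite [LHS]mxE XE {1}/adjmx [X in _ + X]mxE [X in _ + X]mxE XE conjc_sum -big_split /=.
rewrite /Dm mulr_sumr; apply: eq_bigr => c _.
rewrite !conjcM conj_i conj_real conjcK rmorphB /=; ring.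
Qed.

Lemma defE Rm : antiherm_defect W Rm =
  (\matrix_(a, b) complex.Re ('i * Dm Rm a b), \matrix_(a, b) complex.Im ('i * Dm Rm a b)).
Proof.
rewrite /antiherm_defect /=; congr pair; apply/matrixP => a b; by rewrite [LHS]mxE [RHS]mxE HE.
Qed.

Lemma Dm_lin (a : R) x y i j : Dm (a *: x + y) i j = a%:C * Dm x i j + Dm y i j.
Proof.
rewrite /Dm mulr_sumr -big_split; apply: eq_bigr => c _.
rewrite !mxE !rmorphB !rmorphD !rmorphM /=; ring.
Qed.

Lemma def_lin : linear (antiherm_defect W).
Proof.
move=> a x y; rewrite !defE /=; congr pair; apply/matrixP => i j; rewrite !mxE Dm_lin.
  by rewrite mulrDr mulrCA ReMD.
by rewrite mulrDr mulrCA ImMD.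
Qed.

Lemma L_fD Rm : antiherm_defect W Rm = 0 <-> (forall a b, Dm Rm a b = 0).
Proof.
rewrite defE; split.
  case=> /matrixP HA /matrixP HB a b.
  have := HA a b; have := HB a b; rewrite !mxE => h1 h2.
  have : 'i * Dm Rm a b = 0 by apply: ReIm_eq0.
  move/eqP; rewrite mulf_eq0 => /orP[|/eqP //].
  by rewrite eq_complex /= andbC oner_eq0.
move=> H; congr pair; apply/matrixP => a b; by rewrite !mxE H mulr0.
Qed.

Definition Eset := [set p : 'I_n * 'I_n | W p.1 p.2 == 1].
Definition Xd : seq 'M[R]_n := [seq delta_mx p.1 p.2 | p <- enum Eset].

Lemma span_entry0 (s0 : seq ('I_n * 'I_n)) (Y : 'M[R]_n) p :
  p \notin s0 -> Y \in <<[seq delta_mx q.1 q.2 | q <- s0]>>%VS -> Y p.1 p.2 = 0.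
Proof.
move=> ps HY; rewrite (coord_span (X := in_tuple [seq delta_mx q.1 q.2 | q <- s0]) HY).
rewrite summxE big1 // => i _.
rewrite mxE (nth_map p) /=; last by apply: (leq_trans (ltn_ord i)); rewrite size_map.
rewrite mxE; case: eqP => [e1|]; case: eqP => [e2|] //=; rewrite ?mulr0 //.
have ep : p = nth p s0 i by rewrite [LHS]surjective_pairing e1 e2 -surjective_pairing.
move: ps; rewrite {1}ep mem_nth //.
by apply: (leq_trans (ltn_ord i)); rewrite size_map.
Qed.

Lemma free_deltas (s0 : seq ('I_n * 'I_n)) : uniq s0 ->
  free [seq (delta_mx q.1 q.2 : 'M[R]_n) | q <- s0].
Proof.
elim: s0 => [_|p s0 IH] /=; first exact: nil_free.
case/andP => ps us; rewrite free_cons IH // andbT.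
apply/negP => /(span_entry0 ps); rewrite !mxE !eqxx /=.
by move/eqP; rewrite oner_eq0.
Qed.

Lemma in_span_zero (Y : 'M[R]_n) :
  (forall e v, W e v != 1 -> Y e v = 0) -> Y \in <<Xd>>%VS.
Proof.
move=> H; rewrite {1}(matrix_sum_delta Y) pair_big /=.
rewrite (bigID (fun p => p \in Eset)) /= [X in _ + X]big1 ?addr0.
  apply: memv_suml => p pE; apply: memvZ; apply: memv_span.
  by apply/mapP; exists p => //; rewrite mem_enum.
move=> p; rewrite inE => pE; rewrite H ?scale0r //.
Qed.

Lemma memU Rm : (Rm \in lker (linfun (antiherm_defect W))) =
   [forall e, forall v, (W e v != 1) ==> (gH Rm e v == 0)].
Proof.
rewrite memv_ker lfunE_lin; last exact: def_lin.
apply/eqP/forallP => [H e|H].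
  apply/forallP => v; apply/implyP => Wev; apply/eqP.
  by move: H; rewrite L_fD L_DT L_Tg; apply.
apply/L_fD/L_DT/L_Tg => e v Wev.
by have /forallP/(_ v)/implyP/(_ Wev)/eqP := H e.
Qed.

Lemma Ddim_main : Ddim W = #|Eset|.
Proof.
set U := lker (linfun (antiherm_defect W)).
set h := linfun gH.
have hE : forall x, h x = gH x by move=> x; rewrite /h lfunE_lin //; exact: gH_lin.
have kh : lker h == 0%VS.
  apply/eqP/vspaceP => x; rewrite memv_ker memv0 hE; apply/eqP/eqP => [/g_inj //|->].
  by rewrite -hE linear0.
have dimE : \dim U = \dim (h @: U).
  by rewrite limg_dim_eq // (eqP kh) capv0.
have imE : (h @: U)%VS = <<Xd>>%VS.
  apply/eqP; rewrite eqEsubv; apply/andP; split.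
    apply/subvP => y /memv_imgP [x xU ->]; rewrite hE; apply: in_span_zero.
    move: xU; rewrite memU => /forallP H e v Wev.
    by have /forallP/(_ v)/implyP/(_ Wev)/eqP := H e.
  apply/span_subvP => y /mapP [p]; rewrite mem_enum inE => pE ->.
  have -> : delta_mx p.1 p.2 = h (h^-1%VF (delta_mx p.1 p.2)) by rewrite lker0_lfunVK.
  apply: memv_img; rewrite memU; apply/forallP => e; apply/forallP => v.
  apply/implyP => Wev; rewrite -hE lker0_lfunVK // mxE.
  apply/eqP; case: eqP => [e1|] //; case: eqP => [e2|] //=.
  by move: Wev; rewrite e1 e2 pE.
rewrite /Ddim -/U dimE imE.
have /eqP -> : free Xd by apply: free_deltas; exact: enum_uniq.
by rewrite size_map -cardE.
Qed.

End Main.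

Section Final.
Variable R : realType.
Local Notation C := R[i].

Lemma Ddim_charmx n (W : 'M[C]_n) : (0 < n)%N -> charmx W -> Ddim W = #|Eset W|.
Proof.
move=> n0 [Wsym Wu [s Ws] [t Wt] Wo].
exact: (@Ddim_main R n W s t n0 Wsym Wu Ws Wt Wo).
Qed.

Definition Phi m p (x : ('I_m * 'I_m) * ('I_p * 'I_p)) : 'I_(m * p) * 'I_(m * p) :=
  (mxtens_index (x.1.1, x.2.1), mxtens_index (x.1.2, x.2.2)).

Lemma Phi_inj m p : injective (@Phi m p).
Proof.
move=> [[a b] [c d]] [[a' b'] [c' d']] h.
have := congr1 (fun q => (@mxtens_unindex m p q.1, @mxtens_unindex m p q.2)) h.
by rewrite /= !mxtens_indexK; case=> -> -> -> ->.
Qed.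

Lemma Phi_sub m p (A : 'M[C]_m) (B : 'M[C]_p) :
  @Phi m p @: setX (Eset A) (Eset B) \subset Eset (A *t B).
Proof.
apply/subsetP => q /imsetP [[[a b] [c d]]]; rewrite !inE /= => /andP[/eqP h1 /eqP h2] ->.
by rewrite /Phi /= tensmxE h1 h2 mulr1.
Qed.

Lemma card_PhiX m p (A : 'M[C]_m) (B : 'M[C]_p) :
  #|@Phi m p @: setX (Eset A) (Eset B)| = (#|Eset A| * #|Eset B|)%N.
Proof. by rewrite card_imset ?cardsX //; exact: Phi_inj. Qed.

Lemma ones_tens_eq m p (A : 'M[C]_m) (B : 'M[C]_p) :
  (forall i j k l, A i j * B k l = 1 -> A i j = 1) ->
  #|Eset (A *t B)| = (#|Eset A| * #|Eset B|)%N.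
Proof.
move=> H; rewrite -card_PhiX.
suff -> : Eset (A *t B) = @Phi m p @: setX (Eset A) (Eset B) by [].
apply/eqP; rewrite eqEsubset Phi_sub andbT.
apply/subsetP => [[q1 q2]]; rewrite inE /=.
case: (mxtens_indexP q1) => i k; case: (mxtens_indexP q2) => j l.
rewrite tensmxE => /eqP h.
have h1 := H _ _ _ _ h; move: h; rewrite h1 mul1r => h2.
apply/imsetP; exists ((i, j), (k, l)) => //.
by rewrite !inE /= h1 h2 !eqxx.
Qed.

Lemma ones_tens_lt m p (A : 'M[C]_m) (B : 'M[C]_p) i j k l :
  A i j * B k l = 1 -> A i j != 1 ->
  (#|Eset A| * #|Eset B| < #|Eset (A *t B)|)%N.
Proof.
move=> h hA; rewrite -card_PhiX; apply: proper_card; rewrite properE Phi_sub /=.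
apply/subsetPn; exists (@Phi m p ((i, j), (k, l))).
  by rewrite inE /Phi /= tensmxE h.
apply/imsetP => [[y]]; rewrite !inE => /andP[/eqP y1 _] /Phi_inj ey.
by subst y; move: hA; rewrite /= in y1; rewrite y1 eqxx.
Qed.

Lemma prod_pos ns : all (fun n => 0 < n)%N ns -> (0 < foldr muln 1%N ns)%N.
Proof. by elim: ns => //= n ns IH /andP[n0 /IH h]; rewrite muln_gt0 n0. Qed.

Lemma fourier_root ns : all (fun n => 0 < n)%N ns ->
  forall i j, fourier R ns i j ^+ (foldr muln 1%N ns) = 1.
Proof.
elim: ns => [_ x y|n ns IH] /=.
  by rewrite [x]ord1 [y]ord1 mxE expr1.
move=> /andP[n0 /IH H] x y.
case: (mxtens_indexP x) => i k; case: (mxtens_indexP y) => j l.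
rewrite tensmxE exprMn.
have h1 : Fmat R n i j ^+ (n * foldr muln 1%N ns) = 1.
  by rewrite exprM FmatE -(eeX R n0) (ee_muln R n0) expr1n.
by rewrite h1 mul1r mulnC exprM H expr1n.
Qed.

Lemma fourier_zero ns : all (fun n => 0 < n)%N ns ->
  forall i j : 'I_(foldr muln 1%N ns), nat_of_ord i = 0%N -> fourier R ns i j = 1.
Proof.
elim: ns => [_ x y _|n ns IH] /=.
  by rewrite [x]ord1 [y]ord1 mxE.
move=> /andP[n0 hns] x y; have H := IH hns.
case: (mxtens_indexP x) => i k; case: (mxtens_indexP y) => j l /= h.
have ik : (nat_of_ord i = 0 /\ nat_of_ord k = 0)%N.
  move: h => /eqP; rewrite addn_eq0 muln_eq0 => /andP[/orP[/eqP hi|/eqP hN] /eqP hk] //.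
  by have hp := prod_pos hns; rewrite hN in hp.
rewrite tensmxE H ?ik.2 // mulr1 FmatE ik.1 mul0n.
exact: ee0.
Qed.

Lemma fourier_entry ns p : all (fun n => 0 < n)%N ns -> prime p ->
  (p %| foldr muln 1%N ns)%N -> forall k, exists i j, fourier R ns i j = ee R p k.
Proof.
elim: ns => [_ pp|n ns IH] /=.
  by rewrite dvdn1 => /eqP p1; move: pp; rewrite p1.
move=> /andP[n0 hns] pp; have N0 := prod_pos hns.
have p0 := prime_gt0 pp; have p1 := prime_gt1 pp.
rewrite Euclid_dvdM // => /orP[pn|pN] k.
  have hi : (n %/ p < n)%N by rewrite ltn_Pdiv.
  have hj : (k %% p < n)%N by apply: leq_trans (ltn_pmod k p0) (dvdn_leq n0 pn).
  pose z := Ordinal N0.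
  exists (mxtens_index (Ordinal hi, z)), (mxtens_index (Ordinal hj, z)).
  rewrite tensmxE (fourier_zero hns) // mulr1 FmatE /= (ee_mod R p0 k).
  have q0 : (0 < n %/ p)%N by rewrite divn_gt0 // dvdn_leq.
  rewrite /ee; congr cexp; rewrite -{2}(divnK pn) !natrM; field.
  by rewrite !pnatr_eq0 -!lt0n p0 q0.
have [i [j hij]] := IH hns pp pN k.
pose o := Ordinal n0.
exists (mxtens_index (o, i)), (mxtens_index (o, j)).
by rewrite tensmxE FmatE /= mul0n ee0 mul1r.
Qed.

Lemma gcd_root (x : C) a b : (0 < a)%N -> x ^+ a = 1 -> x ^+ b = 1 -> x ^+ (gcdn a b) = 1.
Proof.
move=> a0 ha hb; case: (Bezoutl b a0) => u _ /dvdnP [q hq].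
have : x ^+ (gcdn a b + u * b) = 1 by rewrite hq mulnC exprM ha expr1n.
by rewrite exprD mulnC exprM hb expr1n mulr1.
Qed.

End Final.

Theorem lemma5p6 (R : realType) (ns ms : seq nat) :
  all (fun n => 0 < n)%N ns -> all (fun m => 0 < m)%N ms ->
  let N := foldr muln 1%N ns in
  let M := foldr muln 1%N ms in
  (coprime M N ->
     Ddim (fourier R ns *t fourier R ms) = (Ddim (fourier R ns) * Ddim (fourier R ms))%N) /\
  ((1 < gcdn M N)%N ->
     (Ddim (fourier R ns) * Ddim (fourier R ms) < Ddim (fourier R ns *t fourier R ms))%N).
Proof.
move=> Hns Hms N M.
have cF := fourier_charmx R Hns; have cG := fourier_charmx R Hms.
have N0 : (0 < N)%N := prod_pos Hns.
have M0 : (0 < M)%N := prod_pos Hms.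
have NM0 : (0 < N * M)%N by rewrite muln_gt0 N0.
rewrite (Ddim_charmx N0 cF) (Ddim_charmx M0 cG) (Ddim_charmx NM0 (charmx_tens cF cG)).
split.
  move=> cop; apply: ones_tens_eq => i j k l h.
  have hx := fourier_root R Hns i j; have hy := fourier_root R Hms k l.
  have xM : fourier R ns i j ^+ M = 1.
    have := congr1 (fun z => z ^+ M) h; rewrite exprMn hy mulr1 expr1n; exact.
  have := gcd_root M0 xM hx; rewrite (eqP cop) expr1; exact.
move=> g1; set p := pdiv (gcdn M N).
have pp : prime p := pdiv_prime g1.
have pg : (p %| gcdn M N)%N := pdiv_dvd _.
have pM : (p %| M)%N := dvdn_trans pg (dvdn_gcdl M N).
have pN : (p %| N)%N := dvdn_trans pg (dvdn_gcdr M N).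
have [i [j hij]] := fourier_entry R Hns pp pN 1.
have [k [l hkl]] := fourier_entry R Hms pp pM p.-1.
apply: (@ones_tens_lt _ _ _ _ _ i j k l).
  rewrite hij hkl -eeD add1n prednK ?prime_gt0 //.
  by rewrite -[X in ee _ _ X]mul1n (ee_muln R (prime_gt0 pp)).
by rewrite hij; apply: (ee_neq1 R (prime_gt0 pp)); exact: prime_gt1 pp.
Qed.
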